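(* Let $m,b\ge1$, $V=(\mathbb{F}_2)^{mb}$, let $\mathbf M\in\mathrm{GL}(V)$ have order $t$, and define $\alpha:V\to(\mathbb{F}_2)^{2^m bt}$ by $\alpha(v)=(\varepsilon(v),\varepsilon(\mathbf Mv),\dots,\varepsilon(\mathbf M^{t-1}v))$. Then $2^m b-(b-1)\le\dim_{\mathbb{F}_2}\langle\alpha(V)\rangle\le(2^m b-(b-1))t$.
   Context: Identify $(\mathbb{F}_2)^m$ with $\mathbb{F}_{2^m}=\mathbb{F}_2[x]/(p)$ for a primitive polynomial $p$ of degree $m$, with primitive element $\gamma$ (a root of $p$). Let $e_1,\dots,e_{2^m}$ be the standard basis of $(\mathbb{F}_2)^{2^m}$ and define $\varepsilon':\mathbb{F}_{2^m}\to(\mathbb{F}_2)^{2^m}$ by $\varepsilon'(0)=e_1$, $\varepsilon'(\gamma^i)=e_{i+1}$ for $1\le i\le2^m-1$. Writing $v\in V$ as $(v_1,\dots,v_b)$ with $v_j\in(\mathbb{F}_2)^m$, set $\varepsilon(v)=(\varepsilon'(v_1),\dots,\varepsilon'(v_b))\in(\mathbb{F}_2)^{2^m b}$. $\langle S\rangle$ denotes the $\mathbb{F}_2$-linear span. *)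

(* Defs.v *)
From HB Require Import structures.
From mathcomp Require Import all_boot all_order all_algebra.
Set Implicit Arguments. Unset Strict Implicit. Unset Printing Implicit Defensive.
Import GRing.Theory.
Local Open Scope ring_scope.

(* F_2 = 'F_2.  (F_2)^m is 'rV['F_2]_m, identified with F_2[x]/(p) via the
   coefficient vector w.r.t. the basis 1, x, ..., x^(m-1). *)

(* p is a primitive polynomial of degree m over F_2: irreducible of degree m,
   and its root gamma = x mod p has multiplicative order exactly 2^m - 1. *)
Definition primitive_poly (m : nat) (p : {poly 'F_2}) : Prop :=
  size p = m.+1 /\ irreducible_poly p /\
  (p %| 'X^(2 ^ m - 1) - 1) /\
  (forall k : nat, (0 < k < 2 ^ m - 1)%N -> ~~ (p %| 'X^k - 1)).

Definition vec2poly (m : nat) (v : 'rV['F_2]_m) : {poly 'F_2} :=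
  \sum_(i < m) v ord0 i *: 'X^i.

(* eps'(0) = e_1 (0-based index 0); eps'(gamma^i) = e_{i+1} (0-based index i),
   1 <= i <= 2^m - 1, where gamma^i is x^i mod p. *)
Definition eps' (m : nat) (p : {poly 'F_2}) (v : 'rV['F_2]_m) : 'rV['F_2]_(2 ^ m) :=
  \row_(j < 2 ^ m)
    (if vec2poly v == 0 then (nat_of_ord j == 0%N)
     else (0 < j)%N && ('X^j %% p == vec2poly v))%:R.

(* V = (F_2)^(m b) = 'rV_(b * m); block j (j < b) is the entries j*m .. j*m+m-1,
   i.e. row j of vec_mx v. eps(v) = (eps'(v_1), ..., eps'(v_b)). *)
Definition eps (m b : nat) (p : {poly 'F_2}) (v : 'rV['F_2]_(b * m)) :
  'rV['F_2]_(b * 2 ^ m) :=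
  mxvec (\matrix_(j < b) eps' p (row j (vec_mx v))).

Definition appM (n : nat) (M : 'M['F_2]_n) (v : 'rV['F_2]_n) : 'rV['F_2]_n :=
  (M *m v^T)^T.

Definition alpha (m b t : nat) (p : {poly 'F_2}) (M : 'M['F_2]_(b * m))
  (v : 'rV['F_2]_(b * m)) : 'rV['F_2]_(t * (b * 2 ^ m)) :=
  mxvec (\matrix_(k < t) eps p (appM (M ^+ k) v)).

Definition mx_order (n : nat) (M : 'M['F_2]_n) (t : nat) : Prop :=
  (0 < t)%N /\ M ^+ t = 1%:M /\ (forall k : nat, (0 < k < t)%N -> M ^+ k != 1%:M).

(* Main.v *)
Require Import Defs.
From mathcomp Require Import all_boot all_order all_algebra.
Set Implicit Arguments. Unset Strict Implicit. Unset Printing Implicit Defensive.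
Import GRing.Theory.
Local Open Scope ring_scope.
From mathcomp Require Import zify.

Lemma prim_coprimeX m p i : (1 <= m)%N -> primitive_poly m p -> coprimep p ('X^i).
Proof.
move=> m1 [sp [_ [hd _]]].
apply: coprimep_expr.
apply: (coprimep_dvdr hd).
rewrite coprimepX /root !hornerE.
have : (0 < 2 ^ m - 1)%N.
  have : (2 <= 2 ^ m)%N by rewrite -{1}(expn1 2) leq_exp2l.
  move=> h; rewrite subn_gt0; exact: leq_trans h.
case: (2 ^ m - 1)%N => [//|n _].
by rewrite expr0n.
Qed.

Lemma prim_modX_neq0 m p i : (1 <= m)%N -> primitive_poly m p -> 'X^i %% p != 0.
Proof.
move=> m1 hp; have hc := prim_coprimeX i m1 hp.
apply/negP=> /eqP/modp_eq0P hd.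
have := coprimep_dvdl hd hc; rewrite coprimepp.
case: hp => -> _; by case: m m1.
Qed.

Lemma prim_modX_inj m p i j : (1 <= m)%N -> primitive_poly m p ->
  (0 < i < 2 ^ m)%N -> (0 < j < 2 ^ m)%N ->
  ('X^i %% p == 'X^j %% p) = (i == j).
Proof.
move=> m1 hp.
wlog lij : i j / (i <= j)%N.
  move=> W hi hj; case: (leqP i j) => h; first exact: W.
  by rewrite eq_sym W // 1?eq_sym // ltnW.
move=> /andP[i0 im] /andP[j0 jm].
case: (ltngtP i j) lij => // ltij _; last by rewrite ltij eqxx.
apply/negbTE/negP=> /eqP e.
have hd : p %| 'X^(j - i) - 1.
  have : p %| 'X^i * ('X^(j - i) - 1).
    apply/modp_eq0P.
    rewrite mulrBr mulr1 -exprD (subnKC (ltnW ltij)) modpD modpN e.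
    exact: subrr.
  by rewrite (Gauss_dvdpr _ (prim_coprimeX i m1 hp)).
case: hp => _ [_ [_ hk]].
have : (0 < j - i < 2 ^ m - 1)%N.
  rewrite subn_gt0 ltij /=.
  apply: (@leq_ltn_trans (j - 1)%N); first by rewrite leq_sub2l.
  by rewrite ltn_sub2r // (leq_trans _ jm).
by move/hk; rewrite hd.
Qed.

Definition gvec m (p : {poly 'F_2}) (a : 'I_(2 ^ m)) : 'rV['F_2]_m :=
  if (a == 0 :> nat) then 0 else \row_(i < m) ('X^a %% p)`_i.

Lemma vec2poly_row m (q : {poly 'F_2}) : (size q <= m)%N ->
  vec2poly (\row_(i < m) q`_i) = q.
Proof.
move=> hs; rewrite /vec2poly.
under eq_bigr do rewrite mxE.
rewrite -poly_def; apply/polyP=> k; rewrite coef_poly.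
case: ltnP => // hk; rewrite nth_default //; exact: leq_trans hs hk.
Qed.

Lemma vec2poly0 m : vec2poly (0 : 'rV['F_2]_m) = 0.
Proof. by rewrite /vec2poly big1 // => i _; rewrite mxE scale0r. Qed.

Lemma eps'_gvec m p (a : 'I_(2 ^ m)) : (1 <= m)%N -> primitive_poly m p ->
  eps' p (gvec p a) = delta_mx 0 a :> 'rV_(2 ^ m).
Proof.
move=> m1 hp; rewrite /gvec; case: ifP => [/eqP a0|/negbT an0];
  apply/rowP=> j; rewrite !mxE.
  rewrite vec2poly0 eqxx /=; congr (_ %:R).
  by case: j a a0 => [j hj] [a ha] /= a0; subst a.
rewrite vec2poly_row; last first.
  case: hp => sp _.
  by rewrite -ltnS -sp ltn_modp -size_poly_eq0 sp.
rewrite (negbTE (prim_modX_neq0 _ m1 hp)) /=; congr (_ %:R).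
case: (posnP j) => [j0|jp] /=.
  suff -> : (j == a) = false by [].
  by apply/negP => /eqP e; move: an0; rewrite -e j0.
by rewrite (prim_modX_inj m1 hp) // ?jp ?ltn_ord ?lt0n ?an0.
Qed.

Lemma eps'_props m p : (1 <= m)%N -> primitive_poly m p ->
  (forall w : 'rV['F_2]_m, exists a : 'I_(2 ^ m), eps' p w = delta_mx 0 a) /\
  (forall a : 'I_(2 ^ m), exists w : 'rV['F_2]_m, eps' p w = delta_mx 0 a).
Proof.
move=> m1 hp; split; last by move=> a; exists (gvec p a); exact: eps'_gvec.
have inj : injective (@gvec m p).
  move=> a a' e; have := eps'_gvec a m1 hp; rewrite e eps'_gvec // => e2.
  have := congr1 (fun M : 'rV['F_2]_(2 ^ m) => M 0 a) e2.
  rewrite !mxE !eqxx /=; case: (a =P a') => // _.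
have bij : bijective (@gvec m p).
  have := inj_card_bij inj. rewrite card_mx card_Fp // card_ord mul1n leqnn; exact.
case: bij => ginv _ K w; exists (ginv w); by rewrite -(eps'_gvec _ m1 hp) K.
Qed.
Definition epsg (b k N : nat) (ep : 'rV['F_2]_k -> 'rV['F_2]_N)
  (v : 'rV['F_2]_(b * k)) : 'rV['F_2]_(b * N) :=
  mxvec (\matrix_(j < b) ep (row j (vec_mx v))).

Definition alphag (t b k N : nat) (ep : 'rV['F_2]_k -> 'rV['F_2]_N)
  (M : 'M['F_2]_(b * k)) (v : 'rV['F_2]_(b * k)) : 'rV['F_2]_(t * (b * N)) :=
  mxvec (\matrix_(kk < t) epsg ep (appM (M ^+ kk) v)).

Definition Emx b N (f : 'I_b -> 'I_N) : 'M['F_2]_(b, N) :=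
  \matrix_(j < b) (delta_mx 0 (f j) : 'rV['F_2]_N).

Lemma Emx_sum b N (f : 'I_b -> 'I_N) : Emx f = \sum_(j < b) delta_mx j (f j).
Proof.
apply/matrixP=> i a; rewrite !mxE summxE (bigD1 i) //= big1 => [|j /negbTE nj].
  by rewrite !mxE !eqxx addr0.
by rewrite mxE eq_sym nj.
Qed.

Lemma epsg_E b k N (ep : 'rV['F_2]_k -> 'rV['F_2]_N)
  (Hdel : forall w, exists a, ep w = delta_mx 0 a) (v : 'rV['F_2]_(b * k)) :
  exists f, epsg ep v = mxvec (Emx f).
Proof.
have [f hf] := fin_all_exists (fun j : 'I_b => Hdel (row j (vec_mx v))).
exists f; congr mxvec; apply/row_matrixP=> i; by rewrite !rowK hf.
Qed.

Lemma E_epsg b k N (ep : 'rV['F_2]_k -> 'rV['F_2]_N)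
  (Hsur : forall a, exists w, ep w = delta_mx 0 a) (f : 'I_b -> 'I_N) :
  exists v, epsg ep v = mxvec (Emx f).
Proof.
have [w hw] := fin_all_exists (fun j : 'I_b => Hsur (f j)).
exists (mxvec (\matrix_(j < b) w j)); rewrite /epsg mxvecK.
congr mxvec; apply/row_matrixP=> i; by rewrite !rowK hw.
Qed.

Definition S1 b N' : seq 'rV['F_2]_(b * N'.+1) :=
  mxvec (Emx (fun _ : 'I_b => (ord0 : 'I_N'.+1))) ::
  [seq mxvec (delta_mx j (lift ord0 a) - delta_mx j ord0 : 'M['F_2]_(b, N'.+1))
    | j <- enum 'I_b, a <- enum 'I_N'].

Lemma Emx_in_S1 b N' (f : 'I_b -> 'I_N'.+1) : mxvec (Emx f) \in <<S1 b N'>>%VS.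
Proof.
have -> : Emx f = Emx (fun _ => ord0) +
    \sum_(j < b) (delta_mx j (f j) - delta_mx j ord0).
  by rewrite !Emx_sum sumrB addrC subrK.
rewrite linearD linear_sum /=; apply: memvD.
  by apply: memv_span; rewrite inE eqxx.
apply: memv_suml => j _; case: (unliftP ord0 (f j)) => [a ->|->];
  last by rewrite subrr linear0 mem0v.
apply: memv_span; rewrite inE; apply/orP; right.
apply/allpairsP; exists (j, a); by rewrite !mem_enum.
Qed.

Lemma mx_rows_sum t n (r : 'I_t -> 'rV['F_2]_n) :
  \matrix_(k < t) r k = \sum_(k < t) delta_mx k ord0 *m r k.
Proof.
apply/matrixP=> i a; rewrite !mxE summxE (bigD1 i) //= big1 => [|j /negbTE nj].
  by rewrite !mxE big_ord1 !mxE !eqxx mul1r addr0.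
by rewrite !mxE big_ord1 !mxE eq_sym nj mul0r.
Qed.

Lemma lin_span n n' (f : {linear 'rV['F_2]_n -> 'rV['F_2]_n'}) X x :
  x \in <<X>>%VS -> f x \in <<map f X>>%VS.
Proof.
move=> hx; have := memv_img (linfun f) hx.
by rewrite limg_span (eq_map (lfunE f)) lfunE.
Qed.

Lemma blocks_in t n (X : seq 'rV['F_2]_n) (r : 'I_t -> 'rV['F_2]_n) :
  (forall k, r k \in <<X>>%VS) ->
  mxvec (\matrix_(k < t) r k) \in
    <<[seq mxvec (delta_mx k ord0 *m x : 'M['F_2]_(t, n)) | k <- enum 'I_t, x <- X]>>%VS.
Proof.
move=> H; rewrite mx_rows_sum linear_sum; apply: memv_suml => k _.
have := lin_span (mxvec \o mulmx (delta_mx k ord0 : 'M['F_2]_(t, 1))) (H k).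
apply: subvP; apply/span_subvP => y /mapP [x hx ->]; apply: memv_span.
apply/allpairsP; exists (k, x); by rewrite mem_enum.
Qed.

Lemma upper_gen t b N' (s : seq 'rV['F_2]_(t * (b * N'.+1))) :
  (forall y, y \in s -> exists r : 'I_t -> 'I_b -> 'I_N'.+1,
      y = mxvec (\matrix_(kk < t) mxvec (Emx (r kk)))) ->
  (\dim <<s>> <= t * (1 + b * N'))%N.
Proof.
move=> H.
have sub : (<<s>> <= <<[seq mxvec (delta_mx k ord0 *m x : 'M['F_2]_(t, _))
                      | k <- enum 'I_t, x <- S1 b N']>>)%VS.
  apply/span_subvP => y /H [r ->]; apply: blocks_in => kk; exact: Emx_in_S1.
apply: leq_trans (dimvS sub) _; apply: leq_trans (dim_span _) _.
by rewrite size_allpairs size_enum_ord /= size_allpairs !size_enum_ord.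
Qed.

Lemma lower_gen b' N' (s : seq 'rV['F_2]_(b'.+1 * N'.+1)) :
  (forall f, mxvec (Emx f) \in s) -> (b'.+1 * N'.+1 <= \dim <<s>> + b')%N.
Proof.
move=> Hs.
pose C := [seq mxvec (delta_mx (lift ord0 j) ord0 : 'M['F_2]_(b'.+1, N'.+1))
             | j <- enum 'I_b'].
have hE : forall f, mxvec (Emx f) \in (<<s>> + <<C>>)%VS.
  by move=> f; apply: (subvP (addvSl _ _)); apply: memv_span; apply: Hs.
have hC : forall j', mxvec (delta_mx (lift ord0 j') ord0 : 'M['F_2]_(b'.+1, N'.+1))
    \in (<<s>> + <<C>>)%VS.
  move=> j'; apply: (subvP (addvSr _ _)); apply: memv_span.
  by apply/mapP; exists j'; rewrite ?mem_enum.
have hdj : forall j, mxvec (delta_mx j ord0 : 'M['F_2]_(b'.+1, N'.+1))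
    \in (<<s>> + <<C>>)%VS.
  move=> j; case: (unliftP ord0 j) => [j' ->|->]; first exact: hC.
  have -> : delta_mx ord0 ord0 = Emx (fun _ => ord0) -
      \sum_(j' < b') delta_mx (lift ord0 j') (ord0 : 'I_N'.+1).
    by rewrite Emx_sum big_ord_recl addrK.
  rewrite linearB linear_sum /=; apply: memvB; first exact: hE.
  by apply: memv_suml => j' _; exact: hC.
have full : (fullv <= <<s>> + <<C>>)%VS.
  apply/subvP => x _; rewrite [x]row_sum_delta; apply: memv_suml => i _.
  apply: memvZ; case/mxvec_indexP: i => j a; rewrite -mxvec_delta.
  have -> : delta_mx j a = (Emx (fun j' => if j' == j then a else ord0)
                            - Emx (fun _ => ord0)) + delta_mx j ord0.
    rewrite !Emx_sum -sumrB (bigD1 j) //= big1 => [|j' nj].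
      by rewrite eqxx addr0 subrK.
    by rewrite (negbTE nj) subrr.
  rewrite linearD linearB /=; apply: memvD; last exact: hdj.
  by apply: memvB; exact: hE.
have := dimvS full; rewrite dimvf dim_matrix mul1r => h1.
apply: (leq_trans h1); apply: leq_trans (dimv_add_leqif _ _).1 _.
by rewrite leq_add2l; apply: leq_trans (dim_span _) _; rewrite size_map size_enum_ord.
Qed.

Lemma proj_dim t' n (s : seq 'rV['F_2]_(t'.+1 * n)) (s' : seq 'rV['F_2]_n) :
  (forall x, x \in s' -> exists2 y, y \in s & x = row ord0 (vec_mx y)) ->
  (\dim <<s'>> <= \dim <<s>>)%N.
Proof.
move=> H.
have sub : (<<s'>> <= linfun (row (ord0 : 'I_t'.+1) \o vec_mx) @: <<s>>)%VS.
  apply/span_subvP => x /H [y hy ->]; apply/memv_imgP; exists y.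
    exact: memv_span.
  by rewrite lfunE.
apply: leq_trans (dimvS sub) _; rewrite -(limg_ker_dim (linfun (row (ord0 : 'I_t'.+1) \o vec_mx)) <<s>>); exact: leq_addl.
Qed.

Lemma main_gen t b k N (ep : 'rV['F_2]_k -> 'rV['F_2]_N) (M : 'M['F_2]_(b * k)) :
  (0 < t)%N -> (0 < b)%N -> (0 < N)%N ->
  (forall w, exists a, ep w = delta_mx 0 a) ->
  (forall a, exists w, ep w = delta_mx 0 a) ->
  (N * b - (b - 1) <= \dim <<[seq alphag t ep M v | v : 'rV['F_2]_(b * k)]>>%VS
     <= (N * b - (b - 1)) * t)%N.
Proof.
case: N ep => [//|N'] ep; case: t => [//|t']; case: b M => [//|b'] M _ _ _ Hdel Hsur.
have ar : (N'.+1 * b'.+1 - (b'.+1 - 1) = 1 + b'.+1 * N')%N by nia.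
rewrite ar; apply/andP; split.
  have h1 := @lower_gen b' N' [seq epsg ep v | v : 'rV['F_2]_(b'.+1 * k)].
  have h1' : (b'.+1 * N'.+1 <= \dim <<[seq epsg ep v | v : 'rV['F_2]_(b'.+1 * k)]>> + b')%N.
    apply: h1 => f; have [v hv] := E_epsg Hsur f; rewrite -hv.
    by apply/imageP; exists v.
  have h2 : (\dim <<[seq epsg ep v | v : 'rV['F_2]_(b'.+1 * k)]>>
      <= \dim <<[seq alphag t'.+1 ep M v | v : 'rV['F_2]_(b'.+1 * k)]>>)%N.
    apply: proj_dim => x /imageP [v _ ->]; exists (alphag t'.+1 ep M v).
      by apply/imageP; exists v.
    by rewrite /alphag mxvecK rowK expr0 /appM mul1mx trmxK.
  lia.
rewrite [(_ * t'.+1)%N]mulnC; apply: upper_gen => y /imageP [v _ ->].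
have [r hr] := fin_all_exists (fun kk : 'I_t'.+1 => epsg_E Hdel (appM (M ^+ kk) v)).
exists r; congr mxvec; apply/row_matrixP => i; by rewrite !rowK hr.
Qed.

Theorem mainTheorem8 (m b t : nat) (p : {poly 'F_2}) (M : 'M['F_2]_(b * m)) :
  (1 <= m)%N -> (1 <= b)%N ->
  primitive_poly m p ->
  M \in unitmx ->
  mx_order M t ->
  (2 ^ m * b - (b - 1) <=
     \dim <<[seq alpha t p M v | v : 'rV['F_2]_(b * m)]>>%VS <=
     (2 ^ m * b - (b - 1)) * t)%N.
Proof.
move=> m1 b1 hp _ [t0 _].
have [Hdel Hsur] := eps'_props m1 hp.
exact: (main_gen M t0 b1 (expn_gt0 2 m) Hdel Hsur).
Qed.
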